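(* Let $k>0$, $r\ge0$, and let $V_1,\dots,V_r\le\mathbb{Z}^k$ be subgroups of infinite index. Then there exists $x\in\mathbb{Z}^k$ such that $nx\notin\bigcup_{j=1}^rV_j$ for every integer $n>0$. *)

(* Defs.v *)
From mathcomp Require Import all_boot all_order all_algebra.
Set Implicit Arguments. Unset Strict Implicit. Unset Printing Implicit Defensive.
Import GRing.Theory.
Local Open Scope ring_scope.

Definition is_subgroup (k : nat) (V : 'rV[int]_k -> Prop) : Prop :=
  V 0 /\ (forall x y, V x -> V y -> V (x - y)).

(* V has infinite index: the cosets x + V are not finitely many, i.e. no
   finite list of representatives covers Z^k. *)
Definition infinite_index (k : nat) (V : 'rV[int]_k -> Prop) : Prop :=
  forall s : seq 'rV[int]_k, exists x : 'rV[int]_k,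
    forall y, y \in s -> ~ V (x - y).

(* Main.v *)
Require Import Defs.
From Stdlib Require Import Classical.
From mathcomp Require Import all_boot all_order all_algebra ring.
Import Order.TTheory GRing.Theory Num.Theory.
Local Open Scope ring_scope.

Section S.
Variable k : nat.
Notation G := 'rV[int]_k.

Lemma sg_add (V : G -> Prop) : is_subgroup V -> forall x y, V x -> V y -> V (x + y).
Proof. move=> [h0 hs] x y hx hy. have := hs x (0 - y) hx (hs _ _ h0 hy). by rewrite sub0r opprK. Qed.

Lemma sg_opp (V : G -> Prop) : is_subgroup V -> forall x, V x -> V (- x).
Proof. move=> [h0 hs] x hx; have := hs _ _ h0 hx; by rewrite sub0r. Qed.

Lemma sg_muln (V : G -> Prop) : is_subgroup V -> forall x n, V x -> V (x *+ n).
Proof. move=> hV x n hx; elim: n => [|n IH]; first by rewrite mulr0n; case: hV.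
rewrite mulrS; exact: sg_add. Qed.

Lemma sg_mulz (V : G -> Prop) : is_subgroup V -> forall x (z : int), V x -> V (x *~ z).
Proof. move=> hV x [n|n] hx.
  by rewrite -pmulrn; exact: sg_muln.
rewrite NegzE mulrNz. apply: sg_opp => //. rewrite -pmulrn; exact: sg_muln. Qed.

Lemma sg_sum (V : G -> Prop) : is_subgroup V -> forall (F : 'I_k -> G),
  (forall i, V (F i)) -> V (\sum_i F i).
Proof. move=> hV F hF; apply: (big_ind V) => //; [by case: hV | exact: sg_add]. Qed.

Definition sat (V : G -> Prop) x := exists n, (0 < n)%N /\ V (x *+ n).

Lemma sat_sub (V : G -> Prop) : is_subgroup V -> is_subgroup (sat V).
Proof.
move=> hV; split; first by exists 1%N; split => //; rewrite mulr1n; case: hV.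
move=> x y [n [hn hx]] [m [hm hy]]; exists (n * m)%N; split; first by rewrite muln_gt0 hn.
have -> : (x - y) *+ (n * m) = (x *+ n) *+ m - (y *+ m) *+ n.
  by rewrite mulrnBl -!mulrnA (mulnC m n).
by apply: hV.2; apply: sg_muln.
Qed.

Lemma pig (S : G -> Prop) (hS : is_subgroup S) (e : G) (s : seq G) :
  forall N, (forall n, (N <= n)%N -> exists2 y, y \in s & S (e *+ n - y)) ->
  exists d, (0 < d)%N /\ S (e *+ d).
Proof.
elim: s => [|y0 s IH] N h.
  by have [y] := h N (leqnn N).
case: (classic (exists n1, (N <= n1)%N /\ S (e *+ n1 - y0))) => [[n1 [hn1 hS1]]|hno].
  case: (classic (exists n2, (n1 < n2)%N /\ S (e *+ n2 - y0))) => [[n2 [hn2 hS2]]|hno2].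
    exists (n2 - n1)%N; split; first by rewrite subn_gt0.
    have := hS.2 _ _ hS2 hS1.
    have -> // : e *+ n2 - y0 - (e *+ n1 - y0) = e *+ (n2 - n1).
    by rewrite mulrnBr ?(ltnW hn2) // opprB addrA subrK.
  apply: (IH n1.+1) => n hn. have [y hy hSy] := h n (leq_trans hn1 (ltnW hn)).
  move: hy; rewrite in_cons => /orP[/eqP eq|hy]; last by exists y.
  by exfalso; apply: hno2; exists n; split => //; subst y.
apply: (IH N) => n hn. have [y hy hSy] := h n hn.
move: hy; rewrite in_cons => /orP[/eqP eq|hy]; last by exists y.
by exfalso; apply: hno; exists n; split => //; subst y.
Qed.

Lemma commonM (V : G -> Prop) (hV : is_subgroup V) (f : 'I_k -> G)
  (h : forall i, exists c, (0 < c)%N /\ V (f i *+ c)) (l : seq 'I_k) :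
  exists M, (0 < M)%N /\ forall i, i \in l -> V (f i *+ M).
Proof.
elim: l => [|i l [M [hM hl]]]; first by exists 1%N.
have [c [hc hVc]] := h i.
exists (M * c)%N; split; first by rewrite muln_gt0 hM.
move=> j; rewrite in_cons => /orP[/eqP->|hj].
  rewrite mulnC mulrnA; exact: sg_muln.
rewrite mulrnA; apply: sg_muln => //; exact: hl.
Qed.

Lemma mxzE (A : G) z i j : (A *~ z) i j = A i j *~ z.
Proof. case: z => n; first by rewrite /= mulmxnE.
by rewrite !NegzE !mulrNz mxE -!pmulrn mulmxnE. Qed.

Lemma fin_index (V : G -> Prop) (hV : is_subgroup V) (M : nat) (hM : (0 < M)%N)
  (h : forall i : 'I_k, V (delta_mx 0 i *+ M)) :
  ~ infinite_index V.
Proof.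
move=> hinf.
pose R := [seq map_mx (fun a : 'I_M => (a : nat)%:Z) f | f : 'rV['I_M]_k].
have [x hx] := hinf R.
pose Mz : int := M%:Z.
have hMz : Mz != 0 by rewrite /Mz eqz_nat -lt0n.
have hlt : forall j, (`|(x ord0 j %% Mz)%Z| < M)%N.
  move=> j; rewrite -ltz_nat gez0_abs ?modz_ge0 //; exact: ltz_pmod.
pose f : 'rV['I_M]_k := \row_j Ordinal (hlt j).
apply: (hx (map_mx (fun a : 'I_M => (a : nat)%:Z) f)).
  by apply: map_f; rewrite mem_enum.
have -> : x - map_mx (fun a : 'I_M => (a : nat)%:Z) f =
   \sum_j (delta_mx ord0 j *+ M) *~ (x ord0 j %/ Mz)%Z.
  apply/matrixP => a b; rewrite !mxE summxE.
  rewrite (ord1 a) (bigD1 b) //= big1 ?addr0; last first.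
    move=> j hj; rewrite mxzE mulmxnE mxE /= eq_sym (negbTE hj) /=.
    by rewrite mul0rn mul0rz.
  rewrite mxzE mulmxnE mxE !eqxx /= gez0_abs ?modz_ge0 //.
  rewrite {1}(divz_eq (x ord0 b) Mz) addrK /Mz.
  ring.
apply: sg_sum => // j; apply: sg_mulz => //; exact: h.
Qed.

Lemma sat_inf (V : G -> Prop) (hV : is_subgroup V) (hinf : infinite_index V) :
  infinite_index (sat V).
Proof.
move=> s. apply: NNPP => hno.
have cov : forall x, exists2 y, y \in s & sat V (x - y).
  move=> x; apply: NNPP => hx; apply: hno; exists x => y hy hS; apply: hx; by exists y.
have hd : forall i : 'I_k, exists c, (0 < c)%N /\ V (delta_mx 0 i *+ c).
  move=> i.
  have [d [hd [n [hn hVn]]]] := @pig (sat V) (@sat_sub V hV) (delta_mx 0 i) s 0%N (fun n _ => cov _).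
  exists (d * n)%N; split; first by rewrite muln_gt0 hd. by rewrite mulrnA.
have [M [hM hall]] := @commonM V hV (fun i => delta_mx 0 i) hd (enum 'I_k).
apply: (@fin_index V hV M hM _ hinf) => i; apply: hall; by rewrite mem_enum.
Qed.

Lemma neumann (r : nat) (H : 'I_r -> G -> Prop) (hsub : forall j, is_subgroup (H j))
  (hinf : forall j, infinite_index (H j)) :
  forall m (s : seq ('I_r * G)), (forall p, p \in s -> (p.1 < m)%N) ->
  ~ (forall z, exists2 p, p \in s & H p.1 (z - p.2)).
Proof.
elim=> [|m IH] s hs cov.
  have [p hp _] := cov 0. by have := hs p hp.
case: (ltnP m r) => hmr; last first.
  apply: (IH s) => // p hp; exact: leq_trans (ltn_ord p.1) hmr.
pose j := Ordinal hmr.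
pose A := [seq p.2 | p <- s & p.1 == j].
have [x hx] := hinf j A.
pose s' := [seq (q.1, p.2 - x + q.2) | p <- [seq p <- s | p.1 == j], q <- [seq q <- s | q.1 != j]]
   ++ [seq q <- s | q.1 != j].
have hne : forall q, q \in s -> q.1 != j -> (q.1 < m)%N.
  move=> q hq hqj; have := hs q hq; rewrite ltnS leq_eqVlt => /orP[/eqP e|//].
  by exfalso; move/eqP: hqj; apply; apply: val_inj.
apply: (IH s').
  move=> p; rewrite mem_cat => /orP[/allpairsP [[p1 q1] [h1 h2 ->]]|].
    by move: h2 => /=; rewrite mem_filter => /andP[hq1 hq2]; apply: hne.
  by rewrite mem_filter => /andP[hq1 hq2]; apply: hne.
move=> z; have [p hp hHp] := cov z.
case: (eqVneq p.1 j) => ej; last first.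
  by exists p => //; rewrite mem_cat mem_filter ej hp orbT.
have [q hq hHq] := cov (z - p.2 + x).
case: (eqVneq q.1 j) => eq.
  exfalso; apply: (hx q.2).
    by apply/mapP; exists q => //; rewrite mem_filter eq eqxx hq.
  rewrite ej in hHp; rewrite eq in hHq.
  have := (hsub j).2 _ _ hHq hHp.
  have -> // : z - p.2 + x - q.2 - (z - p.2) = x - q.2.
  by apply/matrixP => a b; rewrite !mxE; ring.
exists (q.1, p.2 - x + q.2).
  rewrite mem_cat; apply/orP; left.
  apply: (allpairs_f (fun p q => (q.1, p.2 - x + q.2))); rewrite mem_filter ?ej ?eq ?hp ?hq ?eqxx //.
rewrite /=. have -> : z - (p.2 - x + q.2) = z - p.2 + x - q.2.
  by apply/matrixP => a b; rewrite !mxE /=; ring.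
exact: hHq.
Qed.

End S.

Theorem lemma4p8 (k : nat) (hk : (0 < k)%N) (r : nat)
    (V : 'I_r -> 'rV[int]_k -> Prop)
    (hsub : forall j, is_subgroup (V j))
    (hinf : forall j, infinite_index (V j)) :
  exists x : 'rV[int]_k, forall (n : nat), (0 < n)%N -> forall j : 'I_r, ~ V j (x *+ n).
Proof.
apply: NNPP => hno.
have hS : forall j, is_subgroup (@sat k (V j)) by move=> j; exact: sat_sub.
have hI : forall j, infinite_index (@sat k (V j)) by move=> j; exact: sat_inf.
apply: (@neumann k r (fun j => @sat k (V j)) hS hI r [seq (j, 0) | j <- enum 'I_r]).
  by move=> p /mapP [j _ ->]; exact: ltn_ord.
move=> z; apply: NNPP => hz; apply: hno; exists z => n hn j hV; apply: hz.
exists (j, 0); first by apply: map_f; rewrite mem_enum.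
by rewrite /= subr0; exists n.
Qed.
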